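(* Let $n\ge 6$ and $k$ be coprime integers with $3\le k\le n-3$. Then $\mathsf{BO}(k,\mathbb{Z}/n\mathbb{Z})\ge k+1$; that is, there is a subset of $\mathbb{Z}/n\mathbb{Z}$ of cardinality $k$ which is not $k$-barycentric.
   Context: For a positive integer $k$, a set $\{g_1,\dots,g_k\}$ of $k$ distinct elements of a finite abelian group $G$ (written additively) is called $k$-barycentric if $\sum_{i=1}^k g_i = k\,g_j$ for some $1\le j\le k$. The $k$-th barycentric Olson constant $\mathsf{BO}(k,G)$ is the smallest integer $\ell$ such that every subset $A\subseteq G$ with $|A|\ge \ell$ contains a $k$-barycentric subset (so that always $\mathsf{BO}(k,G)\le |G|+1$). *)

(* Defs.v *)
From HB Require Import structures.
From mathcomp Require Import all_boot all_order all_algebra.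
Set Implicit Arguments. Unset Strict Implicit. Unset Printing Implicit Defensive.
Import GRing.Theory.
Local Open Scope ring_scope.

Definition barycentric (G : finZmodType) (k : nat) (B : {set G}) : bool :=
  (#|B| == k)%N && [exists j in B, \sum_(g in B) g == j *+ k].

Definition has_barycentric (G : finZmodType) (k : nat) (A : {set G}) : bool :=
  [exists B : {set G}, (B \subset A) && barycentric k B].

Definition BO_prop (G : finZmodType) (k : nat) (l : nat) : bool :=
  [forall A : {set G}, (l <= #|A|)%N ==> has_barycentric k A].

Lemma BO_prop_top (G : finZmodType) (k : nat) : BO_prop G k #|G|.+1.
Proof.
apply/forallP => A; apply/implyP => H.
have := max_card A; rewrite leqNgt => /negP; by [].
Qed.

Lemma BO_exists (G : finZmodType) (k : nat) : exists l, BO_prop G k l.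
Proof. by exists #|G|.+1; apply: BO_prop_top. Qed.

Definition BO (k : nat) (G : finZmodType) : nat := ex_minn (BO_exists G k).

(* Main.v *)
Require Import Defs.
From HB Require Import structures.
From mathcomp Require Import all_boot all_order all_algebra zify.
Set Warnings "-all".

Lemma subset_sum (k : nat) : forall m t, k <= m -> t <= k * (m - k) ->
  exists l : seq nat, [/\ uniq l, size l = k, all (fun x => 0 < x <= m) l &
     sumn l = sumn (iota 1 k) + t].
Proof.
elim: k => [|k IH] m t Hkm Ht.
  by exists [::]; split => //=; lia.
pose e := minn (m - k.+1) t.
have [l [Hu Hs Ha Hsum]] := IH (k + e) (t - e) (leq_addr _ _) ltac:(rewrite /e; nia).
exists (k.+1 + e :: l); split => //=.
- rewrite Hu andbT; apply/negP => Hin.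
  by move/allP: Ha => /(_ _ Hin); lia.
- by rewrite Hs.
- apply/andP; split; first by rewrite /e; lia.
  apply/allP => x Hx; move/allP: Ha => /(_ _ Hx); rewrite /e; lia.
- have H1: sumn (iota 1 k.+1) = sumn (iota 1 k) + k.+1 by rewrite -(addn1 k) iotaD sumn_cat /=; lia.
  have H2: 1 + sumn (iota 2 k) = sumn (iota 1 k.+1) by [].
  rewrite Hsum /e; lia.
Qed.

Lemma exists_l (n k : nat) : 6 <= n -> 3 <= k -> k <= n - 3 ->
  exists l : seq nat, [/\ uniq l, size l = k, all (fun x => 0 < x < n) l &
     n %| sumn l].
Proof.
move=> hn hk hkn.
pose T := sumn (iota 1 k).
pose t := (n - T %% n) %% n.
have ht : t <= k * (n.-1 - k).
  have : t < n by rewrite ltn_mod; lia.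
  nia.
have [l [Hu Hs Ha Hsum]] := subset_sum k n.-1 t ltac:(lia) ht.
exists l; split => //.
  apply/allP => x Hx; move/allP: Ha => /(_ _ Hx); lia.
rewrite Hsum /dvdn /t modnDmr -modnDml subnKC ?modnn //.
by apply: ltnW; rewrite ltn_mod; lia.
Qed.

Theorem mainTheorem4 (n k : nat) (hn : (6 <= n)%N) (hcop : coprime n k)
    (hk3 : (3 <= k)%N) (hkn : (k <= n - 3)%N) :
  (k.+1 <= BO k 'Z_n)%N.
Proof.
have n1 : 1 < n by lia.
have [l [Hu Hs Ha Hsum]] := exists_l n k hn hk3 hkn.
pose s := [seq (x%:R : 'Z_n)%R | x <- l].
have Hinj : {in l &, injective (fun x => (x%:R : 'Z_n)%R)}.
  move=> x y Hx Hy /(congr1 val) /=; rewrite !val_Zp_nat // !modn_small //.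
  - by move/allP: Ha => /(_ _ Hy) /andP[].
  - by move/allP: Ha => /(_ _ Hx) /andP[].
have Hsu : uniq s by rewrite map_inj_in_uniq.
pose A := [set x in s].
have HA : #|A| = k by rewrite cardsE; move/card_uniqP: Hsu => ->; rewrite size_map.
have Hnb : ~~ barycentric k A.
  rewrite /barycentric negb_and; apply/orP; right.
  apply/negP => /existsP[j /andP[Hj /eqP Hsumj]].
  have : (\sum_(g in A) g = (sumn l)%:R)%R.
    rewrite (eq_bigl (fun g => g \in s)); last by move=> g; rewrite inE.
    rewrite -big_uniq // big_map sumnE GRing.natr_sum //.
  rewrite Hsumj.
  move: Hj; rewrite inE => /mapP[x Hx ->].
  rewrite -GRing.mulrnA =>  /(congr1 val) /=.
  rewrite !val_Zp_nat // (eqP Hsum).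
  move/allP: Ha => /(_ _ Hx) /andP[x0 xn].
  move/eqP; rewrite -/(dvdn _ _) Gauss_dvdl // => /dvdn_leq; lia.
rewrite /BO; case: ex_minnP => m Hm Hmin.
rewrite ltnNge; apply/negP => Hmk.
move/forallP: Hm => /(_ A) /implyP; rewrite HA => /(_ Hmk).
case/existsP => B /andP[HBA HB].
have HBeq : B = A.
  apply/eqP; rewrite eqEcard HBA HA; by case/andP: (HB) => /eqP ->; rewrite leqnn.
by move: Hnb; rewrite -HBeq HB.
Qed.
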